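(* Let $r \geq 5$ be odd and consider type $D_r$ realized in $\mathbb{R}^r$ with orthonormal basis $e_1,\dots,e_r$, simple roots $\alpha_i = e_i - e_{i+1}$ ($1\le i\le r-1$), $\alpha_r = e_{r-1}+e_r$. Let $C$ be the linear map with $C(e_1) = -e_r$, $C(e_i) = -e_i$ for $2 \le i \le r-1$, and $C(e_r) = e_1$. Then $C$ and $C^{-1}$ are rational elements of $W(D_r)$ and each has valency $1$ in the rationality graph $\Gamma(D_r)$: the only neighbor of $C$ is $s_{r-1}C$, and the only neighbor of $C^{-1}$ is $s_r C^{-1}$.
   Context: $W(D_r)$ is the Weyl group, generated by simple reflections $s_i$ ($s_i$ swaps $e_i, e_{i+1}$ for $i<r$; $s_r$ maps $e_{r-1}\mapsto -e_r$, $e_r \mapsto -e_{r-1}$). Positive roots $\Pi_+ = \{e_i \pm e_j : i<j\}$. $\alpha\le\beta$ iff $\beta-\alpha$ is a nonnegative integer combination of simple roots. For $A\subseteq\Pi_+$, $\mathrm{Adj}(A) = \{\alpha\in\Pi_+ : \exists\beta\in A,\ \alpha\le\beta\}$. For $u\in W$: $\nu^0(u) = u(\Pi_+)\cap\Pi_+$, $\nu^k(u) = u(\mathrm{Adj}\,\nu^{k-1}(u))\cap\Pi_+$; the sequence is descending and eventually constant with value $\nu(u)$; $u$ is rational iff $\nu(u)=\emptyset$. The rationality graph $\Gamma(D_r)$ has the rational elements as vertices, $u,v$ adjacent iff $u = s_i v$ for some $i$. *)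

(* Defs.v *)
(* Type D_r realized on column vectors 'cV[int]_r;
   Weyl group elements are r x r integer matrices acting by left
   multiplication. Indices of e_1..e_r and s_1..s_r / alpha_1..alpha_r are
   1-based naturals in the paper; e_k is the ordinal k-1 here. *)
From HB Require Import structures.
From mathcomp Require Import all_boot all_order all_algebra.
Set Implicit Arguments. Unset Strict Implicit. Unset Printing Implicit Defensive.
Import GRing.Theory Num.Theory.
Local Open Scope ring_scope.

Definition b2z (b : bool) : int := if b then 1 else 0.

Definition e (r : nat) (k : 'I_r) : 'cV[int]_r := \col_a b2z (a == k).

(* Simple roots alpha_i, 1-based i in 1..r:
   alpha_i = e_i - e_(i+1) for i < r, alpha_r = e_(r-1) + e_r. *)
Definition alpha (r : nat) (i : nat) : 'cV[int]_r :=
  \col_a (if (i < r)%N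
          then b2z (val a == i.-1) - b2z (val a == i)
          else b2z (val a == r.-2) + b2z (val a == r.-1)).

(* Simple reflections s_i (1-based i in 1..r), as matrices whose column b is
   the image of e_(b+1). For i<r: swaps e_i, e_(i+1); s_r: e_(r-1) |-> -e_r,
   e_r |-> -e_(r-1), other basis vectors fixed. *)
Definition srefl (r : nat) (i : nat) : 'M[int]_r :=
  \matrix_(a, b)
    (if (i < r)%N then
       (if val b == i.-1 then b2z (val a == i)
        else if val b == i then b2z (val a == i.-1)
        else b2z (a == b))
     else
       (if val b == r.-2 then - b2z (val a == r.-1)
        else if val b == r.-1 then - b2z (val a == r.-2)
        else b2z (a == b))).

(* W(D_r): the group generated by s_1, ..., s_r (finite, generators are
   involutions, so the generated monoid is the generated group). *)
Inductive in_W (r : nat) : 'M[int]_r -> Prop :=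
| W_one : in_W 1%:M
| W_step : forall (i : nat) (w : 'M[int]_r),
    (1 <= i <= r)%N -> in_W w -> in_W (srefl r i *m w).

Definition posroot (r : nat) (v : 'cV[int]_r) : Prop :=
  exists i j : 'I_r, (i < j)%N /\ (v = e i + e j \/ v = e i - e j).

Definition rle (r : nat) (a b : 'cV[int]_r) : Prop :=
  exists c : nat -> nat, b - a = \sum_(i < r) (alpha r i.+1) *+ c i.

Definition Adj (r : nat) (A : 'cV[int]_r -> Prop) : 'cV[int]_r -> Prop :=
  fun a => posroot a /\ exists b, A b /\ rle a b.

Fixpoint nu (r : nat) (u : 'M[int]_r) (k : nat) : 'cV[int]_r -> Prop :=
  match k with
  | 0 => fun v => posroot v /\ exists w, posroot w /\ u *m w = v
  | k'.+1 => fun v => posroot v /\ exists w, Adj (nu u k') w /\ u *m w = v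
  end.

(* u is rational iff the (descending, eventually constant) sequence nu^k(u)
   reaches the empty set. *)
Definition rational (r : nat) (u : 'M[int]_r) : Prop :=
  exists k, forall v, ~ nu u k v.

Definition vertex (r : nat) (u : 'M[int]_r) : Prop := in_W u /\ rational u.

Definition adjacent (r : nat) (u v : 'M[int]_r) : Prop :=
  exists i, (1 <= i <= r)%N /\ u = srefl r i *m v.

Definition Cmx (r : nat) : 'M[int]_r :=
  \matrix_(a, b)
    (if val b == 0%N then - b2z (val a == r.-1)
     else if val b == r.-1 then b2z (val a == 0%N)
     else - b2z (a == b)).

(* Main.v *)
Require Import Defs.
From mathcomp Require Import all_boot all_order all_algebra.
From mathcomp Require Import zify.
Set Implicit Arguments. Unset Strict Implicit. Unset Printing Implicit Defensive.
Import GRing.Theory Num.Theory.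
Local Open Scope ring_scope.

Ltac noif t := lazymatch t with context [if _ then _ else _] => fail | _ => idtac end.
Ltac crush_step := match goal with
 | H : context [if _ then _ else _] |- _ => move: H
 | |- context [(?a <= ?b)%N] => noif a; noif b; case: (leqP a b) => /= ?; try (exfalso; lia)
 | |- context [?a == ?b] => noif a; noif b; case: (a =P b) => /= ?; try subst; try (exfalso; lia)
 end.
Ltac crush := rewrite ?/b2z /=; repeat crush_step; intros; try lia.

Section S.
Variable r : nat.

Definition ev (n : nat) : 'cV[int]_r := \col_a b2z (val a == n).

Lemma e_ev (k : 'I_r) : e k = ev k.
Proof. by apply/colP => a; rewrite !mxE. Qed.

Lemma ev_mx (n : nat) (a : 'I_r) : ev n a 0 = b2z (val a == n).
Proof. by rewrite mxE. Qed.

Lemma mul_ev (M : 'M[int]_r) (k : 'I_r) : M *m ev k = \col_a M a k.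
Proof.
apply/colP => a; rewrite !mxE (bigD1 k) //= big1 ?addr0.
  by rewrite mxE eqxx /= mulr1.
by move=> b /negbTE Hb; rewrite mxE val_eqE Hb /= mulr0.
Qed.

Definition act (M : 'M[int]_r) (P : nat -> nat) (S : nat -> int) :=
  forall n, (n < r)%N -> M *m ev n = S n *: ev (P n).

Lemma act_mul A B P1 S1 P2 S2 : act A P1 S1 -> act B P2 S2 ->
  (forall n, (n < r)%N -> (P2 n < r)%N) ->
  act (A *m B) (fun n => P1 (P2 n)) (fun n => S1 (P2 n) * S2 n).
Proof.
move=> HA HB HP n Hn; rewrite -mulmxA HB // -scalemxAr HA ?HP //.
by rewrite scalerA mulrC.
Qed.

Lemma act_ext M P S P' S' : act M P S ->
  (forall n, (n < r)%N -> P n = P' n /\ S n = S' n) -> act M P' S'.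
Proof. by move=> H H' n Hn; case: (H' n Hn) => <- <-; apply: H. Qed.

Lemma act_eq A B P S : act A P S -> act B P S -> A = B.
Proof.
move=> HA HB; apply/matrixP => a b.
have := congr1 (fun M : 'cV[int]_r => M a 0) (HA _ (ltn_ord b)).
have := congr1 (fun M : 'cV[int]_r => M a 0) (HB _ (ltn_ord b)).
rewrite !(mul_ev _ b) !mxE => -> ->. by [].
Qed.

Lemma act_one : act 1%:M (fun n => n) (fun _ => 1).
Proof. by move=> n Hn; rewrite mul1mx scale1r. Qed.

Lemma act_val M P S n p s : act M P S -> (n < r)%N -> P n = p -> S n = s ->
  M *m ev n = s *: ev p.
Proof. by move=> H Hn <- <-; apply: H. Qed.

Lemma act_entry (M : 'M[int]_r) (P : nat -> nat) (S : nat -> int) :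
  (forall (a b : 'I_r), M a b = S (val b) * b2z (val a == P (val b))) -> act M P S.
Proof.
move=> H n Hn; have -> : n = val (Ordinal Hn) by [].
rewrite mul_ev; apply/colP => a; rewrite !mxE H. by [].
Qed.

End S.

Definition Ps (r i n : nat) : nat :=
  if (i < r)%N then (if n == i.-1 then i else if n == i then i.-1 else n)
  else (if n == r.-2 then r.-1 else if n == r.-1 then r.-2 else n).
Definition Ss (r i n : nat) : int :=
  if (i < r)%N then 1 else (if (n == r.-2) || (n == r.-1) then -1 else 1).

Lemma act_srefl r i : (1 <= i <= r)%N -> (2 <= r)%N -> act (srefl r i) (Ps r i) (Ss r i).
Proof.
move=> /andP[H1 H2] Hr; apply: act_entry => a b; rewrite mxE -[a == b]val_eqE /Ps /Ss.
case: a => x Hx; case: b => y Hy /=.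
crush.
Qed.

Definition PC (r n : nat) : nat := if n == 0%N then r.-1 else if n == r.-1 then 0%N else n.
Definition SC (r n : nat) : int := if n == r.-1 then 1 else -1.

Lemma act_C r : (2 <= r)%N -> act (Cmx r) (PC r) (SC r).
Proof.
move=> Hr; apply: act_entry => a b; rewrite mxE -[a == b]val_eqE /PC /SC.
case: a => x Hx; case: b => y Hy /=.
crush.
Qed.

Section Lin.
Variable r : nat.
Implicit Types (W : nat -> int) (x y a b d v : 'cV[int]_r).

Definition lin W x : int := \sum_(a < r) W a * x a 0.

Lemma linD W x y : lin W (x + y) = lin W x + lin W y.
Proof. by rewrite /lin -big_split; apply: eq_bigr => a _; rewrite mxE mulrDr. Qed.

Lemma linB W x y : lin W (x - y) = lin W x - lin W y.
Proof. by rewrite /lin -sumrB; apply: eq_bigr => a _; rewrite !mxE mulrBr. Qed.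

Lemma linZ W c x : lin W (c *: x) = c * lin W x.
Proof. by rewrite /lin mulr_sumr; apply: eq_bigr => a _; rewrite mxE mulrCA. Qed.

Lemma linMn W x n : lin W (x *+ n) = lin W x *+ n.
Proof. by rewrite /lin -sumrMnl; apply: eq_bigr => a _; rewrite mulmxnE mulrnAr. Qed.

Lemma lin_sum W (F : 'I_r -> 'cV[int]_r) :
  lin W (\sum_(i < r) F i) = \sum_(i < r) lin W (F i).
Proof.
rewrite /lin (exchange_big). apply: eq_bigr => a _.
by rewrite summxE mulr_sumr.
Qed.

Lemma lin_ev W n : (n < r)%N -> lin W (ev r n) = W n.
Proof.
move=> Hn; rewrite /lin (bigD1 (Ordinal Hn)) //= big1 ?addr0.
  by rewrite mxE eqxx mulr1.
move=> b Hb; rewrite mxE; case: eqP => [E|]; last by rewrite mulr0.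
by case/eqP: Hb; apply: val_inj.
Qed.

Lemma lin_two W c1 c2 p1 p2 : (p1 < r)%N -> (p2 < r)%N ->
  lin W (c1 *: ev r p1 + c2 *: ev r p2) = c1 * W p1 + c2 * W p2.
Proof. by move=> H1 H2; rewrite linD !linZ !lin_ev. Qed.

Lemma alpha_ev k : alpha r k =
  if (k < r)%N then ev r k.-1 - ev r k else ev r r.-2 + ev r r.-1.
Proof. by apply/colP => a; case: ifP => H; rewrite !mxE H. Qed.

Lemma lin_mono W a b : (forall k, (k < r)%N -> 0 <= lin W (alpha r k.+1)) ->
  rle a b -> lin W a <= lin W b.
Proof.
move=> HW [c Hc]; rewrite -subr_ge0 -linB Hc lin_sum.
apply: sumr_ge0 => i _; rewrite linMn; apply: mulrn_wge0; exact: HW.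
Qed.

Lemma rle_refl a : rle a a.
Proof. by exists (fun _ => 0%N); rewrite subrr big1 // => i _; rewrite mulr0n. Qed.

Lemma rle_trans a b d : rle a b -> rle b d -> rle a d.
Proof.
move=> [c1 H1] [c2 H2]; exists (fun i => c2 i + c1 i)%N.
have -> : d - a = (d - b) + (b - a) by rewrite addrA subrK.
by rewrite H1 H2 -big_split; apply: eq_bigr => i _; rewrite mulrnDr.
Qed.

Lemma rle_step a k : (1 <= k <= r)%N -> rle a (a + alpha r k).
Proof.
move=> /andP[H1 H2]; have Hk : (k.-1 < r)%N by lia.
exists (fun i : nat => nat_of_bool (i == k.-1)).
have -> : a + alpha r k - a = alpha r k by rewrite addrC addKr.
rewrite (bigD1 (Ordinal Hk)) //= eqxx mulr1n big1 ?addr0.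
  by rewrite prednK.
move=> i Hi; case: eqP => [E|]; last by rewrite mulr0n.
by case/eqP: Hi; apply: val_inj.
Qed.

Lemma rle_chain (d : nat) : forall (x : nat) a, (x + d < r)%N -> rle a (a + (ev r x - ev r (x + d))).
Proof.
elim: d => [|d IH] x a H.
  by rewrite addn0 subrr addr0; apply: rle_refl.
have -> : ev r x - ev r (x + d.+1) = (ev r x - ev r (x + d)) + alpha r (x + d).+1.
  rewrite alpha_ev ifT; last by lia.
  by rewrite /= addnS addrA subrK.
rewrite addrA; apply: rle_trans (IH x a _) (rle_step _ _); lia.
Qed.

Lemma posroot_dec v : posroot v -> exists i j (t : int),
  [/\ (i < j)%N, (j < r)%N, (t = 1 \/ t = -1) & v = ev r i + t *: ev r j].
Proof.
case=> i [j [Hij [->|->]]]; exists i, j.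
  by exists 1; split => //; [left | rewrite !e_ev scale1r].
by exists (-1); split => //; [right | rewrite !e_ev scaleN1r].
Qed.

Lemma posroot_mk i j (s : bool) : (i < j)%N -> (j < r)%N ->
  posroot (ev r i + (if s then 1 else -1) *: ev r j).
Proof.
move=> Hij Hj; have Hi : (i < r)%N by lia.
exists (Ordinal Hi), (Ordinal Hj); split => //.
rewrite !e_ev /=; case: s; [left; rewrite scale1r | right; rewrite scaleN1r] => //.
Qed.

Lemma posroot_two (t1 t2 : int) p1 p2 : (p1 < r)%N -> (p2 < r)%N -> p1 <> p2 ->
  posroot (t1 *: ev r p1 + t2 *: ev r p2) ->
  ((p1 < p2)%N /\ t1 = 1) \/ ((p2 < p1)%N /\ t2 = 1).
Proof.
move=> H1 H2 Hne /posroot_dec [i [j [t [Hij Hj Ht Heq]]]].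
have Hi : (i < r)%N by lia.
have E := fun (a : 'I_r) => congr1 (fun M : 'cV[int]_r => M a 0) Heq.
have := E (Ordinal Hi); have := E (Ordinal Hj); rewrite !mxE /=.
case: Ht => ->; crush.
Qed.

End Lin.

Lemma nonrat r (u : 'M[int]_r) a : posroot a -> posroot (u *m a) -> rle a (u *m a) ->
  ~ rational u.
Proof.
move=> Ha Hb Hab [k Hk]; apply: (Hk (u *m a)).
elim: k {Hk} => [|k IH] /=; split => //; exists a; split => //.
by split => //; exists (u *m a).
Qed.

Definition F1 (n : nat) : int := b2z (n == 0%N).

Lemma F1_alpha r k : (2 <= r)%N -> (k < r)%N -> 0 <= lin F1 (alpha r k.+1).
Proof.
move=> Hr Hk; rewrite alpha_ev; case: ifP => H.
  by rewrite linB !lin_ev /F1 //; crush.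
by rewrite linD !lin_ev /F1 //; crush.
Qed.

Section Rat.
Variables (r : nat) (u : 'M[int]_r) (P : nat -> nat) (S : nat -> int) (W : nat -> int).
Hypothesis Hr : (2 <= r)%N.
Hypothesis Hact : act u P S.
Hypothesis HP : forall n, (n < r)%N -> (P n < r)%N.
Hypothesis Hinj : forall n m, (n < r)%N -> (m < r)%N -> n <> m -> P n <> P m.
Hypothesis HW : forall k, (k < r)%N -> 0 <= lin W (alpha r k.+1).
Hypothesis HA : forall i j (t : int), (i < j)%N -> (j < r)%N -> (t = 1 \/ t = -1) ->
  ((P i < P j)%N /\ S i = 1) \/ ((P j < P i)%N /\ t * S j = 1) ->
  S i * W (P i) + t * S j * W (P j) <= 0.
Hypothesis HB : forall i j (t : int), (i < j)%N -> (j < r)%N -> (t = 1 \/ t = -1) ->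
  ((P i < P j)%N /\ S i = 1) \/ ((P j < P i)%N /\ t * S j = 1) ->
  W i + t * W j <= 0 ->
  0 < F1 i + t * F1 j /\ S i * F1 (P i) + t * S j * F1 (P j) <= 0.

Lemma keyA x : posroot x -> posroot (u *m x) -> lin W (u *m x) <= 0.
Proof.
move=> /posroot_dec [i [j [t [Hij Hj Ht ->]]]].
have Hi : (i < r)%N by lia.
rewrite mulmxDr -scalemxAr !Hact // scalerA => Hp.
rewrite lin_two ?HP //; apply: HA => //.
apply: posroot_two Hp; rewrite ?HP //; apply: Hinj => //; lia.
Qed.

Lemma keyB x : posroot x -> posroot (u *m x) -> lin W x <= 0 ->
  0 < lin F1 x /\ lin F1 (u *m x) <= 0.
Proof.
move=> /posroot_dec [i [j [t [Hij Hj Ht ->]]]].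
have Hi : (i < r)%N by lia.
rewrite mulmxDr -scalemxAr !Hact // scalerA => Hp.
rewrite -[ev r i]scale1r !lin_two ?HP // !mul1r => HWx.
apply: HB => //.
apply: posroot_two Hp; rewrite ?HP //; apply: Hinj => //; lia.
Qed.

Lemma rat_crit : rational u.
Proof.
exists 2%N => v /= [Hv [w [[Hw [b [[Hb [w1 [[Hw1 [b1 [[Hb1 [w2 [Hw2 Hw2b]]] Hle1]]] Hw1b]]] Hle]]] Hwv]]].
subst.
have h1 := keyA Hw2 Hb1.
have h2 : lin W w1 <= 0 by have := lin_mono HW Hle1; lia.
have [_ h3] := keyB Hw1 Hb h2.
have h4 := keyA Hw1 Hb.
have h5 : lin W w <= 0 by have := lin_mono HW Hle; lia.
have h6 : lin F1 w <= 0.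
  have := lin_mono (fun k Hk => F1_alpha Hr Hk) Hle; lia.
have [h7 _] := keyB Hw Hv h5.
lia.
Qed.

End Rat.

Definition W1 (n : nat) : int := 1.
Definition Wg (r n : nat) : int := 1 - 2 * b2z (n == r.-1).

Lemma W1_alpha r k : (2 <= r)%N -> (k < r)%N -> 0 <= lin W1 (alpha r k.+1).
Proof.
move=> Hr Hk; rewrite alpha_ev; case: ifP => H.
  by rewrite linB !lin_ev /W1 //; crush.
by rewrite linD !lin_ev /W1 //; crush.
Qed.

Lemma Wg_alpha r k : (2 <= r)%N -> (k < r)%N -> 0 <= lin (Wg r) (alpha r k.+1).
Proof.
move=> Hr Hk; rewrite alpha_ev; case: ifP => H.
  by rewrite linB !lin_ev /Wg //; crush.
by rewrite linD !lin_ev /Wg //; crush.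
Qed.

Lemma rat_C r : (5 <= r)%N -> rational (Cmx r).
Proof.
move=> Hr; apply: (@rat_crit r (Cmx r) (PC r) (SC r) W1) => //.
- lia.
- apply: act_C; lia.
- by move=> n Hn; rewrite /PC; crush.
- by move=> n m Hn Hm Hnm; rewrite /PC; crush.
- by move=> k Hk; apply: W1_alpha => //; lia.
- by move=> i j t Hij Hj Ht; rewrite /PC /SC /W1; case: Ht => ->; crush.
- by move=> i j t Hij Hj Ht; rewrite /PC /SC /W1 /F1; case: Ht => ->; crush.
Qed.

Lemma inW_mul r (a b : 'M[int]_r) : in_W a -> in_W b -> in_W (a *m b).
Proof.
move=> Ha Hb; elim: Ha => [|i w Hi Hw IH]; first by rewrite mul1mx.
by rewrite -mulmxA; apply: W_step.
Qed.

Lemma inW_s r i : (1 <= i <= r)%N -> in_W (srefl r i).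
Proof. by move=> H; rewrite -[srefl r i]mulmx1; apply: W_step => //; apply: W_one. Qed.

Lemma famT r (Hr : (5 <= r)%N) : forall d j, (j + d + 2 = r)%N -> exists M : 'M[int]_r,
  in_W M /\ act M (fun n => if n == j then r.-1 else if n == r.-1 then j else n) (fun _ => 1).
Proof.
elim=> [|d IH] j Hj.
  exists (srefl r r.-1); split; first by apply: inW_s; lia.
  apply: act_ext (act_srefl _ _) _; try lia.
  by move=> n Hn; rewrite /Ps /Ss; split; crush.
have [M [HM HMa]] := IH j.+1 ltac:(lia).
exists (srefl r j.+1 *m M *m srefl r j.+1); split.
  by apply: inW_mul; [apply: inW_mul|]; rewrite ?HM //; apply: inW_s; lia.
have Hs : act (srefl r j.+1) (Ps r j.+1) (Ss r j.+1) by apply: act_srefl; lia.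
apply: act_ext (act_mul (act_mul Hs HMa _) Hs _) _.
- by move=> n Hn; crush.
- by move=> n Hn; rewrite /Ps; crush.
- by move=> n Hn; rewrite /Ps /Ss; split; crush.
Qed.

Lemma famN r (Hr : (5 <= r)%N) : forall d j, (j + d + 2 = r)%N -> exists M : 'M[int]_r,
  in_W M /\ act M (fun n => n) (fun n => if (n == j) || (n == r.-1) then -1 else 1).
Proof.
elim=> [|d IH] j Hj.
  exists (srefl r r.-1 *m srefl r r); split.
    by apply: inW_mul; apply: inW_s; lia.
  have H1 : act (srefl r r.-1) (Ps r r.-1) (Ss r r.-1) by apply: act_srefl; lia.
  have H2 : act (srefl r r) (Ps r r) (Ss r r) by apply: act_srefl; lia.
  apply: act_ext (act_mul H1 H2 _) _.
  - by move=> n Hn; rewrite /Ps; crush.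
  - by move=> n Hn; rewrite /Ps /Ss; split; crush.
have [M [HM HMa]] := IH j.+1 ltac:(lia).
exists (srefl r j.+1 *m M *m srefl r j.+1); split.
  by apply: inW_mul; [apply: inW_mul|]; rewrite ?HM //; apply: inW_s; lia.
have Hs : act (srefl r j.+1) (Ps r j.+1) (Ss r j.+1) by apply: act_srefl; lia.
apply: act_ext (act_mul (act_mul Hs HMa _) Hs _) _.
- by move=> n Hn; crush.
- by move=> n Hn; rewrite /Ps; crush.
- by move=> n Hn; rewrite /Ps /Ss; split; crush.
Qed.

Lemma famF r (Hr : (5 <= r)%N) : forall k m, (m + k.*2 + 2 = r)%N -> (1 <= m)%N ->
  exists M : 'M[int]_r,
  in_W M /\ act M (fun n => n) (fun n => if (m <= n)%N then -1 else 1).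
Proof.
elim=> [|k IH] m Hm H1.
  have [M [HM HMa]] := famN Hr (d := 0) (j := m) ltac:(lia).
  exists M; split => //; apply: act_ext HMa _ => n Hn; split => //; crush.
have [M [HM HMa]] := IH m.+2 ltac:(lia) ltac:(lia).
have [N1 [HN1 HN1a]] := famN Hr (d := (r - m - 2)%N) (j := m) ltac:(lia).
have [N2 [HN2 HN2a]] := famN Hr (d := (r - m - 3)%N) (j := m.+1) ltac:(lia).
exists (N1 *m N2 *m M); split.
  by apply: inW_mul => //; apply: inW_mul.
apply: act_ext (act_mul (act_mul HN1a HN2a _) HMa _) _.
- by move=> n Hn.
- by move=> n Hn.
- by move=> n Hn; split; crush.
Qed.

Definition SCi (n : nat) : int := if n == 0%N then 1 else -1.

Lemma parity r : odd r -> (5 <= r)%N -> exists k, (1 + k.*2 + 2 = r)%N.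
Proof.
move=> Ho Hr; have := odd_double_half r; rewrite Ho => H.
exists (r./2).-1; rewrite -!muln2 in H *; lia.
Qed.

Lemma Cstuff r : (5 <= r)%N -> odd r ->
  in_W (Cmx r) /\ exists Mci, [/\ in_W Mci, act Mci (PC r) SCi & invmx (Cmx r) = Mci].
Proof.
move=> Hr Ho; have [k Hk] := parity Ho Hr.
have [F [HF HFa]] := famF Hr Hk (isT : (1 <= 1)%N).
have [T [HT HTa]] := famT Hr (d := (r - 2)%N) (j := 0) ltac:(lia).
have HC : Cmx r = F *m T.
  apply: act_eq (act_C _) _; first lia.
  apply: act_ext (act_mul HFa HTa _) _.
  - by move=> n Hn; crush.
  - by move=> n Hn; rewrite /PC /SC; split; crush.
have HCi : act (T *m F) (PC r) SCi.
  apply: act_ext (act_mul HTa HFa _) _.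
  - by move=> n Hn.
  - by move=> n Hn; rewrite /PC /SCi; split; crush.
split; first by rewrite HC; apply: inW_mul.
exists (T *m F); split => //; first by apply: inW_mul.
have H1 : Cmx r *m (T *m F) = 1%:M.
  apply: (act_eq _ (@act_one r)).
  apply: act_ext (act_mul (act_C _) HCi _) _; try lia.
  - by move=> n Hn; rewrite /PC; crush.
  - by move=> n Hn; rewrite /PC /SC /SCi; split; crush.
have [U _] := mulmx1_unit H1.
have -> : invmx (Cmx r) = invmx (Cmx r) *m (Cmx r *m (T *m F)) by rewrite H1 mulmx1.
by rewrite mulKmx.
Qed.

Lemma rat_Ci r (M : 'M[int]_r) : (5 <= r)%N -> act M (PC r) SCi -> rational M.
Proof.
move=> Hr Ha; apply: (@rat_crit r M (PC r) SCi (Wg r)) => //.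
- lia.
- by move=> n Hn; rewrite /PC; crush.
- by move=> n m Hn Hm Hnm; rewrite /PC; crush.
- by move=> k Hk; apply: Wg_alpha => //; lia.
- by move=> i j t Hij Hj Ht; rewrite /PC /SCi /Wg; case: Ht => ->; crush.
- by move=> i j t Hij Hj Ht; rewrite /PC /SCi /Wg /F1; case: Ht => ->; crush.
Qed.

Lemma rat_u1 r : (5 <= r)%N -> rational (srefl r r.-1 *m Cmx r).
Proof.
move=> Hr.
have Hs : act (srefl r r.-1) (Ps r r.-1) (Ss r r.-1) by apply: act_srefl; lia.
have Ha := act_mul Hs (act_C (ltac:(lia) : (2 <= r)%N)) (fun n Hn => ltac:(rewrite /PC; crush)).
apply: (rat_crit (W := W1) _ Ha) => //.
- lia.
- by move=> n Hn; rewrite /PC /Ps; crush.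
- by move=> n m Hn Hm Hnm; rewrite /PC /Ps; crush.
- by move=> k Hk; apply: W1_alpha => //; lia.
- by move=> i j t Hij Hj Ht; rewrite /PC /SC /Ps /Ss /W1; case: Ht => ->; crush.
- by move=> i j t Hij Hj Ht; rewrite /PC /SC /Ps /Ss /W1 /F1; case: Ht => ->; crush.
Qed.

Lemma rat_u2 r (M : 'M[int]_r) : (5 <= r)%N -> act M (PC r) SCi ->
  rational (srefl r r *m M).
Proof.
move=> Hr HM.
have Hs : act (srefl r r) (Ps r r) (Ss r r) by apply: act_srefl; lia.
have Ha := act_mul Hs HM (fun n Hn => ltac:(rewrite /PC; crush)).
apply: (rat_crit (W := Wg r) _ Ha) => //.
- lia.
- by move=> n Hn; rewrite /PC /Ps; crush.
- by move=> n m Hn Hm Hnm; rewrite /PC /Ps; crush.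
- by move=> k Hk; apply: Wg_alpha => //; lia.
- by move=> i j t Hij Hj Ht; rewrite /PC /SCi /Ps /Ss /Wg; case: Ht => ->; crush.
- by move=> i j t Hij Hj Ht; rewrite /PC /SCi /Ps /Ss /Wg /F1; case: Ht => ->; crush.
Qed.

Lemma nonrat_gen r (u : 'M[int]_r) P S x y (t : int) b : act u P S ->
  (x < r)%N -> (y < r)%N ->
  posroot (ev r x + t *: ev r y) -> posroot b ->
  S x *: ev r (P x) + (t * S y) *: ev r (P y) = b ->
  rle (ev r x + t *: ev r y) b -> ~ rational u.
Proof.
move=> Ha Hx Hy Hpa Hpb Hb Hle; apply: (nonrat Hpa).
  by rewrite mulmxDr -scalemxAr !Ha // scalerA Hb.
by rewrite mulmxDr -scalemxAr !Ha // scalerA Hb.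
Qed.

Ltac vec := apply/colP => z; rewrite !mxE; lia.

Lemma nonrat_C r i : (5 <= r)%N -> (1 <= i <= r)%N -> i <> r.-1 ->
  ~ rational (srefl r i *m Cmx r).
Proof.
move=> Hr /andP[Hi1 Hi2] Hne.
have Hs : act (srefl r i) (Ps r i) (Ss r i) by apply: act_srefl; lia.
have Ha := act_mul Hs (act_C (ltac:(lia) : (2 <= r)%N)) (fun n Hn => ltac:(rewrite /PC; crush)).
have [Hi|Hi] := leqP 2 i.
  have [Hi'|Hi'] := leqP i r.-2.
    apply: (nonrat_gen (x := i.-1) (y := i) (t := -1) (b := ev r i.-1 + (-1) *: ev r i) Ha).
    - lia.
    - lia.
    - by apply: (posroot_mk false); lia.
    - by apply: (posroot_mk false); lia.
    - rewrite /Ps /PC /Ss /SC; crush; vec.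
    - exact: rle_refl.
  have Ei : i = r by lia. subst i.
  apply: (nonrat_gen (x := r.-2) (y := r.-1) (t := 1) (b := ev r 0 + 1 *: ev r r.-1) Ha).
  - lia.
  - lia.
  - by apply: (posroot_mk true); lia.
  - by apply: (posroot_mk true); lia.
  - rewrite /Ps /PC /Ss /SC; crush; vec.
  - have := rle_chain (ev r r.-2 + 1 *: ev r r.-1) (x := 0) (d := r.-2) ltac:(lia).
    have -> : (0 + r.-2 = r.-2)%N by lia.
    have -> // : ev r r.-2 + 1 *: ev r r.-1 + (ev r 0 - ev r r.-2) = ev r 0 + 1 *: ev r r.-1 by vec.
have Ei : i = 1%N by lia. subst i.
apply: (nonrat_gen (x := 0) (y := 1) (t := -1) (b := ev r 0 + (-1) *: ev r r.-1) Ha).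
- lia.
- lia.
- by apply: (posroot_mk false); lia.
- by apply: (posroot_mk false); lia.
- rewrite /Ps /PC /Ss /SC; crush; vec.
- have := rle_chain (ev r 0 + (-1) *: ev r 1) (x := 1) (d := r.-2) ltac:(lia).
  have -> : (1 + r.-2 = r.-1)%N by lia.
  have -> // : ev r 0 + (-1) *: ev r 1 + (ev r 1 - ev r r.-1) = ev r 0 + (-1) *: ev r r.-1 by vec.
Qed.

Lemma nonrat_Ci r i (M : 'M[int]_r) : (5 <= r)%N -> act M (PC r) SCi ->
  (1 <= i <= r)%N -> i <> r -> ~ rational (srefl r i *m M).
Proof.
move=> Hr HM /andP[Hi1 Hi2] Hne.
have Hs : act (srefl r i) (Ps r i) (Ss r i) by apply: act_srefl; lia.
have Ha := act_mul Hs HM (fun n Hn => ltac:(rewrite /PC; crush)).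
have [Hi|Hi] := leqP 2 i.
  have [Hi'|Hi'] := leqP i r.-2.
    apply: (nonrat_gen (x := i.-1) (y := i) (t := -1) (b := ev r i.-1 + (-1) *: ev r i) Ha).
    - lia.
    - lia.
    - by apply: (posroot_mk false); lia.
    - by apply: (posroot_mk false); lia.
    - rewrite /Ps /PC /Ss /SCi; crush; vec.
    - exact: rle_refl.
  have Ei : i = r.-1 by lia. subst i.
  apply: (nonrat_gen (x := r.-2) (y := r.-1) (t := -1) (b := ev r 0 + (-1) *: ev r r.-1) Ha).
  - lia.
  - lia.
  - by apply: (posroot_mk false); lia.
  - by apply: (posroot_mk false); lia.
  - rewrite /Ps /PC /Ss /SCi; crush; vec.
  - have := rle_chain (ev r r.-2 + (-1) *: ev r r.-1) (x := 0) (d := r.-2) ltac:(lia).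
    have -> : (0 + r.-2 = r.-2)%N by lia.
    have -> // : ev r r.-2 + (-1) *: ev r r.-1 + (ev r 0 - ev r r.-2) = ev r 0 + (-1) *: ev r r.-1 by vec.
have Ei : i = 1%N by lia. subst i.
apply: (nonrat_gen (x := 0) (y := 1) (t := -1) (b := ev r 0 + 1 *: ev r r.-1) Ha).
- lia.
- lia.
- by apply: (posroot_mk false); lia.
- by apply: (posroot_mk true); lia.
- rewrite /Ps /PC /Ss /SCi; crush; vec.
- apply: rle_trans (rle_chain (ev r 0 + (-1) *: ev r 1) (x := 1) (d := (r - 3)) ltac:(lia)) _.
  have := rle_step (ev r 0 + (-1) *: ev r 1 + (ev r 1 - ev r (1 + (r - 3)))) (k := r) ltac:(lia).
  rewrite alpha_ev ltnn.
  have -> : (1 + (r - 3) = r.-2)%N by lia.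
  have -> // : ev r 0 + (-1) *: ev r 1 + (ev r 1 - ev r r.-2) + (ev r r.-2 + ev r r.-1) = ev r 0 + 1 *: ev r r.-1 by vec.
Qed.

Theorem proposition4 (r : nat) (hr : (5 <= r)%N) (hodd : odd r) :
  vertex (Cmx r) /\ vertex (invmx (Cmx r)) /\
  (forall v : 'M[int]_r,
     (vertex v /\ adjacent v (Cmx r)) <-> v = srefl r r.-1 *m Cmx r) /\
  (forall v : 'M[int]_r,
     (vertex v /\ adjacent v (invmx (Cmx r))) <-> v = srefl r r *m invmx (Cmx r)).
Proof.
have [HWC [M [HWM HMa ->]]] := Cstuff hr hodd.
split; first by split => //; apply: rat_C.
split; first by split => //; apply: rat_Ci.
split => v; split.
- move=> [[_ Hrat] [i [Hi Hv]]]; subst v.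
  case: (i =P r.-1) => [-> //|Hne].
  by case: (nonrat_C hr Hi Hne Hrat).
- move=> ->; split; last by exists r.-1; split => //; lia.
  split; first by apply: W_step => //; lia.
  exact: rat_u1.
- move=> [[_ Hrat] [i [Hi Hv]]]; subst v.
  case: (i =P r) => [-> //|Hne].
  by case: (nonrat_Ci hr HMa Hi Hne Hrat).
- move=> ->; split; last by exists r; split => //; lia.
  split; first by apply: W_step => //; lia.
  exact: rat_u2.
Qed.
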